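(* Let $f:[0,\infty)\to[0,\infty)$ be continuous and satisfy $f(f(x))=x\,f(x)$ for all $x\ge 0$. Then either $f(x)=0$ for all $x\ge0$, or $f(0)=0$, $f(1)=1$ and $f$ is strictly increasing on $[0,\infty)$. *)

(* Defs.v *)
From Stdlib Require Import Reals.
Open Scope R_scope.

Definition continuous_on_nonneg (f : R -> R) : Prop :=
  forall x, 0 <= x -> forall eps, 0 < eps ->
    exists delta, 0 < delta /\
      forall y, 0 <= y -> Rabs (y - x) < delta -> Rabs (f y - f x) < eps.

(* Main.v *)
Require Import Defs.
From Stdlib Require Import Reals Lra.
Open Scope R_scope.

Lemma rmax_lip x y : Rabs (Rmax 0 y - Rmax 0 x) <= Rabs (y - x).
Proof.
  unfold Rmax; destruct (Rle_dec 0 y); destruct (Rle_dec 0 x);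
  unfold Rabs; repeat destruct Rcase_abs; lra.
Qed.

Lemma ext_cont f : continuous_on_nonneg f -> continuity (fun x => f (Rmax 0 x)).
Proof.
  intros Hc x. unfold continuity_pt, continue_in, limit1_in, limit_in.
  intros eps He. simpl. unfold R_dist.
  assert (H0 : 0 <= Rmax 0 x) by apply Rmax_l.
  destruct (Hc _ H0 eps He) as [d [Hd Hd']].
  exists d; split; [exact Hd|].
  intros y [_ Hy]. apply Hd'. apply Rmax_l.
  eapply Rle_lt_trans; [apply rmax_lip|exact Hy].
Qed.

Lemma ivt f a b v : continuous_on_nonneg f -> 0 <= a -> a <= b ->
  (f a - v) * (f b - v) <= 0 -> exists z, a <= z <= b /\ f z = v.
Proof.
  intros Hc Ha Hab Hp.
  set (h := fun x => f (Rmax 0 x) - v).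
  assert (Ch : continuity h).
  { unfold h. apply continuity_minus. apply ext_cont; auto. apply continuity_const. intros ? ?; auto. }
  assert (E : forall x, 0 <= x -> h x = f x - v).
  { intros x Hx. unfold h. rewrite Rmax_right; auto. }
  rewrite <- (E a Ha), <- (E b ltac:(lra)) in Hp.
  destruct (IVT_cor h a b Ch Hab Hp) as [z [Hz Hz0]].
  exists z; split; auto. rewrite E in Hz0; lra.
Qed.

Theorem proposition1 (f : R -> R)
  (Hmaps : forall x, 0 <= x -> 0 <= f x)
  (Hcont : continuous_on_nonneg f)
  (Hfe : forall x, 0 <= x -> f (f x) = x * f x) :
  (forall x, 0 <= x -> f x = 0) \/
  (f 0 = 0 /\ f 1 = 1 /\
   forall x y, 0 <= x -> x < y -> f x < f y).
Proof.
  assert (F0 : f 0 = 0).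
  { set (c := f 0). assert (Hc : 0 <= c) by (apply Hmaps; lra).
    assert (H1 : f c = 0) by (unfold c; rewrite Hfe; lra).
    assert (H2 := Hfe c Hc). rewrite H1 in H2. fold c in H2. lra. }
  assert (Inj : forall x y, 0 <= x -> 0 <= y -> f x = f y -> f x <> 0 -> x = y).
  { intros x y Hx Hy Exy Hn. assert (A := Hfe x Hx). assert (B := Hfe y Hy).
    rewrite Exy in A. rewrite A in B. rewrite Exy in Hn.
    apply (Rmult_eq_reg_r (f y)); auto. }
  destruct (Classical_Prop.classic (forall x, 0 <= x -> f x = 0)) as [Hz|Hnz]; [left; exact Hz|right].
  destruct (Classical_Pred_Type.not_all_ex_not _ _ Hnz) as [a Ha].
  apply Classical_Prop.imply_to_and in Ha. destruct Ha as [Ha Hfa].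
  assert (Hfa' : 0 < f a) by (destruct (Hmaps a Ha); auto; congruence).
  assert (Img : forall v, 0 <= v <= f a -> exists z, 0 <= z /\ f z = v).
  { intros v Hv. destruct (ivt f 0 a v Hcont ltac:(lra) Ha) as [z [Hz1 Hz2]].
    rewrite F0. nra. exists z; split; [lra|auto]. }
  assert (PosImg : forall v, 0 < v <= f a -> 0 < f v).
  { intros v Hv. destruct (Img v ltac:(lra)) as [z [Hz Hfz]].
    assert (z <> 0) by (intro; subst; lra).
    rewrite <- Hfz, Hfe by auto. rewrite Hfz. nra. }
  assert (Pos : forall b, 0 < b -> 0 < f b).
  { intros b Hb. destruct (Hmaps b ltac:(lra)) as [|Hfb]; auto. exfalso.
    set (p := Rmin (f a) b / 2).
    assert (Hp : 0 < p < b /\ p <= f a) by (unfold p, Rmin; destruct Rle_dec; lra).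
    assert (Hv := PosImg p ltac:(lra)).
    destruct (ivt f 0 p (f p / 2) Hcont ltac:(lra) ltac:(lra)) as [x1 [Hx1 E1]].
    { rewrite F0. nra. }
    destruct (ivt f p b (f p / 2) Hcont ltac:(lra) ltac:(lra)) as [x2 [Hx2 E2]].
    { rewrite <- Hfb. nra. }
    assert (x1 = x2) by (apply Inj; lra).
    subst x2. assert (x1 = p) by lra. subst x1. lra. }
  split; [exact F0|split].
  - assert (H1 := Pos 1 ltac:(lra)).
    assert (E := Hfe 1 ltac:(lra)). rewrite Rmult_1_l in E. apply Inj; lra.
  - intros x y Hx Hxy. destruct (Rlt_or_le (f x) (f y)) as [|Hle]; auto. exfalso.
    destruct Hx as [Hx|Hx]; [|subst; rewrite F0 in Hle; assert (H := Pos y Hxy); lra].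
    assert (Hy := Pos y ltac:(lra)).
    destruct (ivt f 0 x (f y) Hcont ltac:(lra) ltac:(lra)) as [z [Hz Ez]].
    { rewrite F0. nra. }
    assert (z = y) by (apply Inj; lra). lra.
Qed.
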